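(* Let $\delta_j,\delta_k$ be coprime integers with $1<\delta_j<\delta_k$, and let $(x'_j,x'_k)$ be a B\'ezout couple for $(\delta_j,\ \delta_k\bmod\delta_j)$, associated to $i=x'_j\delta_j+x'_k(\delta_k\bmod\delta_j)\le\delta_j$. Then $\big(x'_k,\ x'_j-x'_k\lfloor\delta_k/\delta_j\rfloor\big)$ is a B\'ezout couple for $(\delta_k,\delta_j)$ (associated to the same $i$).
   Context: For coprime positive integers $p,q$, a B\'ezout couple for $(p,q)$ associated to $i\in\{1,\ldots,\max\{p,q\}\}$ is a pair $(x,y)\in\mathbb Z^2$ with $xp+yq=i$ and either $0<y\le p$ (the $\lambda$-B\'ezout couple of $i$, unique) or $0<x\le q$ (the $\mu$-B\'ezout couple of $i$, unique). Note $\delta_k\bmod\delta_j\ge1$ is coprime to $\delta_j$. *)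

(* Defs.v *)
From mathcomp Require Import all_boot all_order all_algebra.
Set Implicit Arguments. Unset Strict Implicit. Unset Printing Implicit Defensive.
Import Order.TTheory GRing.Theory Num.Theory.
Local Open Scope ring_scope.

Definition lambda_bezout (p q i : nat) (x y : int) : Prop :=
  x * p%:Z + y * q%:Z = i%:Z /\ 0 < y /\ y <= p%:Z.

Definition mu_bezout (p q i : nat) (x y : int) : Prop :=
  x * p%:Z + y * q%:Z = i%:Z /\ 0 < x /\ x <= q%:Z.

Definition bezout_couple (p q i : nat) (x y : int) : Prop :=
  [/\ (0 < p)%N, (0 < q)%N, coprime p q, (1 <= i <= maxn p q)%N &
      (lambda_bezout p q i x y \/ mu_bezout p q i x y)].

(* Main.v *)
Require Import Defs.
From mathcomp Require Import all_boot all_order all_algebra.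
From mathcomp Require Import zify.
Import Order.TTheory GRing.Theory Num.Theory.
Local Open Scope ring_scope.

Theorem lemma3p3 (dj dk : nat) (i : nat) (xj xk : int) :
  coprime dj dk -> (1 < dj)%N -> (dj < dk)%N ->
  bezout_couple dj (dk %% dj) i xj xk ->
  (i <= dj)%N ->
  bezout_couple dk dj i xk (xj - xk * (dk %/ dj)%:Z).
Proof.
move=> cjk dj1 djk [_ r0 _ /andP[i1 _] H] idj.
have edk : dk = (dk %/ dj * dj + dk %% dj)%N := divn_eq dk dj.
have q1 : (1 <= dk %/ dj)%N by rewrite divn_gt0; lia.
set q := (dk %/ dj)%N in edk q1 H *; set r := (dk %% dj)%N in edk r0 H *.
have ez : dk%:Z = q%:Z * dj%:Z + r%:Z by rewrite edk PoszD PoszM.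
split => //; first lia; first lia; first by rewrite coprime_sym.
  by apply/andP; split => //; apply: leq_trans idj _; rewrite leq_max leqnn orbT.
case: H => [[e [y0 y1]]|[e [x0 x1]]].
- right; split => //; rewrite ez; lia.
- left; split; first by rewrite ez; lia.
  nia.
Qed.
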